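(* Let $k$ be an odd positive integer and $\mu, n$ positive integers such that $k^4\mu^4 n^4 - 16k(4\mu^2+n^2) = s^2$ for some integer $s$. Then \[ (5k\mu^2 - 4)(5kn^2 - 16) \leq 189. \] *)

(* Defs.v *)
From Stdlib Require Import ZArith Lia.

(* Main.v *)
Require Import Defs.
From Stdlib Require Import ZArith.
From Stdlib Require Import Lia List Bool.
Open Scope Z_scope.

Definition okb (t a : Z) : bool :=
  let N := t^3 + 64 in
  if (N mod a =? 0) && ((a + 4) mod t =? 0) && ((N / a + 16) mod t =? 0) then
    let x := (a + 4) / t in
    let y := (N / a + 16) / t in
    negb (Z.sqrt (x * y) * Z.sqrt (x * y) =? x * y) || ((5*x-4)*(5*y-16) <=? 189)
  else true.

Definition allZ (lo n : Z) (f : Z -> bool) : bool :=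
  forallb (fun i => f (lo + Z.of_nat i)) (List.seq 0 (Z.to_nat n)).

Lemma allZ_spec lo n f : allZ lo n f = true -> forall z, lo <= z < lo + n -> f z = true.
Proof.
  unfold allZ; intros H z Hz.
  rewrite forallb_forall in H.
  specialize (H (Z.to_nat (z - lo))).
  replace (lo + Z.of_nat (Z.to_nat (z - lo))) with z in H by lia.
  apply H. apply in_seq. lia.
Qed.

Lemma big_check : allZ 1 16 (fun t => allZ 1 (t^3+64) (okb t)) = true.
Proof. vm_compute. reflexivity. Qed.

Lemma key t x y m : 1 <= t <= 16 -> 1 <= x -> 1 <= y -> 0 <= m ->
  t * (x * y - t) = 16 * x + 4 * y -> m * m = x * y ->
  (5*x-4)*(5*y-16) <= 189.
Proof.
  intros Ht Hx Hy Hm Heq Hsq.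
  assert (Hb : x * (t*y-16) = t^2 + 4*y) by nia.
  assert (Hb1 : 1 <= t*y - 16) by nia.
  assert (Hab : (t*x-4)*(t*y-16) = t^3+64) by nia.
  assert (Ha1 : 1 <= t*x - 4) by nia.
  assert (Ha2 : t*x - 4 <= t^3+64) by nia.
  pose proof (allZ_spec _ _ _ big_check t ltac:(lia)) as H1.
  pose proof (allZ_spec _ _ _ H1 (t*x-4) ltac:(lia)) as H2.
  unfold okb in H2.
  rewrite <- Hab in H2.
  replace ((t * x - 4) * (t * y - 16) / (t * x - 4)) with (t*y-16) in H2
    by (rewrite (Z.mul_comm (t*x-4)), Z.div_mul; lia).
  replace (t*x-4+4) with (x*t) in H2 by ring.
  replace (t*y-16+16) with (y*t) in H2 by ring.
  rewrite Z.mul_comm, Z.mod_mul, !Z.mod_mul, !Z.div_mul in H2 by lia.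
  cbn [andb] in H2.
  rewrite <- Hsq, Z.sqrt_square, Z.eqb_refl in H2 by lia.
  rewrite Z.eqb_refl in H2; cbn [andb negb orb] in H2. apply Z.leb_le in H2. exact H2.
Qed.

Theorem lemma7 (k mu n s : Z) :
  0 < k -> Z.Odd k -> 0 < mu -> 0 < n ->
  k^4 * mu^4 * n^4 - 16 * k * (4 * mu^2 + n^2) = s^2 ->
  (5 * k * mu^2 - 4) * (5 * k * n^2 - 16) <= 189.
Proof.
  intros Hk _ Hmu Hn H.
  assert (Hx : 1 <= k * mu^2) by nia.
  assert (Hy : 1 <= k * n^2) by nia.
  assert (Hm : 0 <= k * mu * n) by nia.
  assert (Hsq : (k*mu*n) * (k*mu*n) = (k*mu^2) * (k*n^2)) by ring.
  replace (5 * k * mu^2) with (5 * (k*mu^2)) by ring.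
  replace (5 * k * n^2) with (5 * (k*n^2)) by ring.
  replace (k ^ 4 * mu ^ 4 * n ^ 4 - 16 * k * (4 * mu ^ 2 + n ^ 2)) with
    (((k*mu^2)*(k*n^2))^2 - 4 * (16 * (k*mu^2) + 4 * (k*n^2))) in H by ring.
  generalize dependent (k*mu*n). generalize dependent (k*mu^2).
  generalize dependent (k*n^2). intros y Hy x H Hx m Hm Hsq.
  destruct (Z_lt_le_dec y 4) as [Hy4|Hy4]; [nia|].
  set (A := x*y) in *.
  assert (HA : 0 < A) by nia.
  set (s' := Z.abs s).
  assert (Hs' : A^2 - 4 * (16*x+4*y) = s'^2) by (subst s'; rewrite H; destruct (Z.abs_spec s) as [[_ E]|[_ E]]; rewrite E; ring).
  assert (Hs0 : 0 <= s') by lia.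
  clearbody s'. clear H.
  assert (Hlt : s' < A) by nia.
  destruct (Z.Even_or_Odd (A - s')) as [[q Hq]|[q Hq]].
  - assert (Hq1 : 1 <= q) by lia.
    assert (Heq : q * (A - q) = 16*x+4*y) by nia.
    assert (Hqa : q <= A - q) by lia.
    assert (Hq16 : q <= 16) by (subst A; nia).
    apply (key q x y m); try lia.
  - exfalso.
    assert (E : 2*(2*q*q+2*q+2*q*s'+s') + 1 = 4*(16*x+4*y)) by nia.
    lia.
Qed.
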